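(* Let $X$ be a Fréchet space whose topology is induced by a finite or countably infinite separating set $\{p_n:n\in P\}$ of seminorms. Let $I$ be a finite or countably infinite index set; for each $i\in I$ let $\{q_{i,j}: j\in J_i\}$ be a set (of arbitrary cardinality) of continuous seminorms on $X$ and let $w_i:J_i\to\mathbb{R}_{\geq 0}$ be a function. Let \[ X_I=\{x\in X: \sup_{j\in J_i} w_i(j)q_{i,j}(x)<\infty \text{ for all } i\in I\}. \] Then $X_I$ is a linear subspace of $X$, and for each $i\in I$ the map $q_i:X_I\to\mathbb{R}_{\geq 0}$, $q_i(x)=\sup_{j\in J_i} w_i(j)q_{i,j}(x)$, is a seminorm on $X_I$. Moreover, $X_I$ is a Fréchet space when supplied with the locally convex topology induced by the separating family $\{p_n:n\in P\}\cup\{q_i:i\in I\}$; this topology does not depend on the choice of the family $\{p_n:n\in P\}$ inducing the topology of $X$; and the inclusion map $X_I\subset X$ is continuous. *)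

(* Defs.v *)
From HB Require Import structures.
From mathcomp Require Import all_boot all_order all_algebra.
From mathcomp Require Import boolp classical_sets functions cardinality reals.

Set Implicit Arguments.
Unset Strict Implicit.
Unset Printing Implicit Defensive.

Import Order.TTheory GRing.Theory Num.Theory.
Local Open Scope ring_scope.
Local Open Scope classical_set_scope.

Section SeminormTopology.
Variables (R : realType) (V : lmodType R).

Definition is_subspace (S : set V) : Prop :=
  [/\ S 0,
      (forall x y, S x -> S y -> S (x + y)) &
      (forall (a : R) x, S x -> S (a *: x))].

Definition seminorm_on (S : set V) (p : V -> R) : Prop :=
  [/\ (forall x, S x -> 0 <= p x),
      (forall x y, S x -> S y -> p (x + y) <= p x + p y) &
      (forall (a : R) x, S x -> p (a *: x) = `|a| * p x)].

Definition separating_on (S : set V) (P : Type) (p : P -> V -> R) : Prop :=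
  forall x, S x -> (forall n, p n x = 0) -> x = 0.

Definition sn_nbhs (S : set V) (P : Type) (p : P -> V -> R) (x : V)
    (A : set V) : Prop :=
  exists F : set P, finite_set F /\
  exists e : R, 0 < e /\
    forall y, S y -> (forall n, F n -> p n (y - x) < e) -> A y.

Definition sn_open (S : set V) (P : Type) (p : P -> V -> R) (A : set V) : Prop :=
  A `<=` S /\ forall x, A x -> sn_nbhs S p x A.

Definition sn_continuous_real (S : set V) (P : Type) (p : P -> V -> R)
    (f : V -> R) : Prop :=
  forall x, S x -> forall e : R, 0 < e ->
    sn_nbhs S p x (fun y => `|f y - f x| < e).

Definition sn_continuous (S T : set V) (P P' : Type)
    (p : P -> V -> R) (p' : P' -> V -> R) (f : V -> V) : Prop :=
  (forall x, S x -> T (f x)) /\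
  forall x, S x -> forall B, sn_nbhs T p' (f x) B ->
    sn_nbhs S p x (fun y => B (f y)).

Definition sn_complete (S : set V) (P : Type) (p : P -> V -> R) : Prop :=
  forall u : nat -> V, (forall k, S (u k)) ->
    (forall n (e : R), 0 < e -> exists N, forall k l, (N <= k)%N -> (N <= l)%N ->
        p n (u k - u l) < e) ->
    exists x, S x /\
      forall n (e : R), 0 < e -> exists N, forall k, (N <= k)%N -> p n (u k - x) < e.

(* S, with the locally convex topology induced by the countable (finite or
   countably infinite) family p of seminorms, is a Frechet space: p consists
   of seminorms on the subspace S, separates points, and S is complete
   (metrizability follows from countability of the family). *)
Definition frechet_on (S : set V) (P : countType) (p : P -> V -> R) : Prop :=
  [/\ is_subspace S, (forall n, seminorm_on S (p n)),
      separating_on S p & sn_complete S p].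

Definition fam_union (P I : Type) (p : P -> V -> R) (q : I -> V -> R) :
    P + I -> V -> R :=
  fun k => match k with inl n => p n | inr i => q i end.

Definition X_I (I : Type) (J : I -> Type) (w : forall i, J i -> R)
    (q : forall i, J i -> V -> R) : set V :=
  fun x => forall i, exists M : R, forall j : J i, w i j * q i j x <= M.

Definition q_sup (I : Type) (J : I -> Type) (w : forall i, J i -> R)
    (q : forall i, J i -> V -> R) (i : I) (x : V) : R :=
  sup (range (fun j : J i => w i j * q i j x)).

End SeminormTopology.

(* Main.v *)
Require Import Defs.
From HB Require Import structures.
From mathcomp Require Import all_boot all_order all_algebra.
From mathcomp Require Import boolp classical_sets functions cardinality reals.
From mathcomp Require Import ring lra.

Set Implicit Arguments.
Unset Strict Implicit.
Import Order.TTheory GRing.Theory Num.Theory.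
Local Open Scope ring_scope.
Local Open Scope classical_set_scope.

Section Aux.
Variables (R : realType) (V : lmodType R).

Lemma sn0 (r : V -> R) : seminorm_on [set: V] r -> r 0 = 0.
Proof. by case=> _ _ hZ; rewrite -(scale0r (0:V)) hZ // normr0 mul0r. Qed.

Lemma snN (r : V -> R) x : seminorm_on [set: V] r -> r (- x) = r x.
Proof. by case=> _ _ hZ; rewrite -scaleN1r hZ // normrN1 mul1r. Qed.

Lemma snB (r : V -> R) x y : seminorm_on [set: V] r -> r (x - y) = r (y - x).
Proof. by move=> h; rewrite -opprB snN. Qed.

Lemma sntri (r : V -> R) x y : seminorm_on [set: V] r -> r x <= r y + r (x - y).
Proof.
case=> _ hT _; have := hT y (x - y) I I.
by rewrite addrC subrK.
Qed.

Lemma sntri3 (r : V -> R) x y z : seminorm_on [set: V] r ->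
  r (x - z) <= r (x - y) + r (y - z).
Proof.
case=> _ hT _; have := hT (x - y) (y - z) I I.
by rewrite addrA subrK.
Qed.

Definition dom (K K' : Type) (r : K -> V -> R) (r' : K' -> V -> R) :=
  forall k (e : R), 0 < e -> exists G : set K', finite_set G /\
    exists d : R, 0 < d /\ forall y, (forall m, G m -> r' m y < d) -> r k y < e.

Lemma dom_seq (K : eqType) (K' : Type) (r : K -> V -> R) (r' : K' -> V -> R) :
  dom r r' -> forall (s : seq K) (e : R), 0 < e ->
  exists G : set K', finite_set G /\
    exists d : R, 0 < d /\ forall y, (forall m, G m -> r' m y < d) ->
      forall k, k \in s -> r k y < e.
Proof.
move=> hd; elim=> [|a s IH] e he.
  by exists set0; split; [exact: finite_set0|exists 1; split=> //].
have [G1 [fG1 [d1 [d1p h1]]]] := hd a e he.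
have [G2 [fG2 [d2 [d2p h2]]]] := IH e he.
exists (G1 `|` G2); split; first by rewrite finite_setU.
exists (Num.min d1 d2); split; first by rewrite lt_min d1p d2p.
move=> y hy k; rewrite in_cons => /orP[/eqP->|ks].
  apply: h1 => m Gm; have := hy m (or_introl Gm); rewrite lt_min => /andP[] //.
apply: h2 => // m Gm; have := hy m (or_intror Gm); rewrite lt_min => /andP[] //.
Qed.

Lemma dom_nbhs (K : eqType) (K' : Type) (r : K -> V -> R) (r' : K' -> V -> R)
  (S : set V) x A : dom r r' -> sn_nbhs S r x A -> sn_nbhs S r' x A.
Proof.
move=> hd [F [/finite_seqP[s ->] [e [he hA]]]].
have [G [fG [d [dp h]]]] := dom_seq hd s he.
exists G; split=> //; exists d; split=> // y Sy hy.
apply: hA => // n ns; exact: h.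
Qed.

Lemma event_seq (K : eqType) (r : K -> nat -> R) :
  (forall k (e : R), 0 < e -> exists N, forall l, (N <= l)%N -> r k l < e) ->
  forall (s : seq K) (e : R), 0 < e -> exists N, forall l, (N <= l)%N ->
    forall k, k \in s -> r k l < e.
Proof.
move=> hd; elim=> [|a s IH] e he; first by exists 0%N.
have [N1 h1] := hd a e he; have [N2 h2] := IH e he.
exists (maxn N1 N2) => l; rewrite geq_max => /andP[l1 l2] k.
by rewrite in_cons => /orP[/eqP->|ks]; [exact: h1|exact: h2].
Qed.

Lemma open_dom (P P' : Type) (r : P -> V -> R) (r' : P' -> V -> R) :
  (forall n, seminorm_on [set: V] (r n)) ->
  (forall n, seminorm_on [set: V] (r' n)) ->
  (forall A, sn_open [set: V] r A -> sn_open [set: V] r' A) -> dom r r'.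
Proof.
move=> hr hr' ho n e he.
pose B := fun y => r n y < 1.
have oB : sn_open [set: V] r B.
  split=> // y0 By0; exists [set n]; split; first exact: finite_set1.
  exists (1 - r n y0); split; first by rewrite subr_gt0.
  move=> y _ /(_ n erefl) hy; rewrite /B.
  have := sntri y y0 (hr n); lra.
have [_ /(_ 0)] := ho B oB.
case; first by rewrite /B sn0.
move=> G [fG [d [dp h]]].
exists G; split=> //; exists (d * e); split; first exact: mulr_gt0.
move=> y hy.
have : r n (e^-1 *: y) < 1.
  apply: h => // m Gm; rewrite subr0.
  case: (hr' m) => _ _ ->; rewrite // ger0_norm ?invr_ge0 ?ltW //.
  rewrite -(ltr_pM2l he) mulrA divff ?gt_eqF // mul1r mulrC; exact: hy.
case: (hr n) => _ _ ->; rewrite // ger0_norm ?invr_ge0 ?ltW //.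
by rewrite -(ltr_pM2l he) mulrA divff ?gt_eqF // mul1r mulr1.
Qed.

End Aux.

Section Aux2.
Variables (R : realType) (V : lmodType R).

Lemma fam_dom (K K' L : Type) (p : K -> V -> R) (p' : K' -> V -> R)
  (r : L -> V -> R) : dom p p' -> dom (fam_union p r) (fam_union p' r).
Proof.
move=> hd [n|i] e he /=.
  have [G [fG [d [dp h]]]] := hd n e he.
  exists [set inl m | m in G]; split; first exact: finite_image.
  exists d; split=> // y hy; apply: h => m Gm; apply: (hy (inl m)); by exists m.
exists [set inr i]; split; first exact: finite_set1.
by exists e; split=> // y /(_ (inr i) erefl).
Qed.

Lemma subB (S : set V) x y : is_subspace S -> S x -> S y -> S (x - y).
Proof. by case=> _ hD hZ Sx Sy; rewrite -scaleN1r; apply: hD => //; apply: hZ. Qed.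

Lemma semi_restr (S : set V) r : seminorm_on [set: V] r -> seminorm_on S r.
Proof. by case=> h1 h2 h3; split=> *; [apply: h1|apply: h2|apply: h3]. Qed.
End Aux2.
Unset Implicit Arguments.
Set Strict Implicit.
Section Q.
Variables (R : realType) (V : lmodType R) (I : Type) (J : I -> Type)
  (q : forall i, J i -> V -> R) (w : forall i, J i -> R).
Hypothesis hq : forall i (j : J i), seminorm_on [set: V] (q i j).
Hypothesis hw : forall i (j : J i), 0 <= w i j.

Lemma qs_ub i j x : X_I w q x -> w i j * q i j x <= q_sup w q i x.
Proof.
move=> /(_ i) [M hM]; apply: sup_upper_bound; last by exists j.
split; first by exists (w i j * q i j x), j.
by exists M => _ [k _ <-].
Qed.

Lemma qs_le i x M : 0 <= M -> (forall j, w i j * q i j x <= M) -> q_sup w q i x <= M.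
Proof.
move=> M0 hM; case: (pselect (exists j : J i, True)) => [[j _]|nj].
  apply: ge_sup; first by exists (w i j * q i j x), j.
  by move=> _ [k _ <-].
rewrite /q_sup; have -> : range (fun j : J i => w i j * q i j x) = set0.
  by apply/seteqP; split=> // z [j _ _]; apply: nj; exists j.
by rewrite sup0.
Qed.

Lemma qs_ge0 i x : X_I w q x -> 0 <= q_sup w q i x.
Proof.
move=> hx; case: (pselect (exists j : J i, True)) => [[j _]|nj].
  apply: le_trans (qs_ub _ j _ hx); apply: mulr_ge0 => //; by case: (hq _ j) => ->.
rewrite /q_sup; have -> : range (fun j : J i => w i j * q i j x) = set0.
  by apply/seteqP; split=> // z [j _ _]; apply: nj; exists j.
by rewrite sup0.
Qed.

Lemma XI_sub : is_subspace (X_I w q).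
Proof.
split.
- move=> i; exists 0 => j; by rewrite sn0 // mulr0.
- move=> x y hx hy i; have [M1 h1] := hx i; have [M2 h2] := hy i.
  exists (M1 + M2) => j; apply: le_trans (lerD (h1 j) (h2 j)).
  rewrite -mulrDr; apply: ler_wpM2l => //; by case: (hq _ j) => _ ->.
- move=> a x hx i; have [M h] := hx i; exists (`|a| * M) => j.
  case: (hq _ j) => _ _ ->; rewrite // mulrCA; exact: ler_wpM2l.
Qed.

Lemma qs_semi i : seminorm_on (X_I w q) (q_sup w q i).
Proof.
have [_ hD hZ] := XI_sub.
split.
- by move=> x; apply: qs_ge0.
- move=> x y hx hy; apply: qs_le.
    by apply: addr_ge0; apply: qs_ge0.
  move=> j; apply: le_trans (lerD (qs_ub _ j _ hx) (qs_ub _ j _ hy)).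
  rewrite -mulrDr; apply: ler_wpM2l => //; by case: (hq _ j) => _ ->.
- move=> a x hx; apply/eqP; rewrite eq_le; apply/andP; split.
    apply: qs_le; first by apply: mulr_ge0 => //; apply: qs_ge0.
    move=> j; case: (hq _ j) => _ _ ->; rewrite // mulrCA.
    by apply: ler_wpM2l => //; apply: qs_ub.
  have [->|a0] := eqVneq a 0; first by rewrite normr0 mul0r; apply: qs_ge0; apply: hZ.
  have na : 0 < `|a| by rewrite normr_gt0.
  rewrite -ler_pdivlMl //; apply: qs_le.
    by apply: mulr_ge0; [rewrite invr_ge0 ltW|apply: qs_ge0; apply: hZ].
  move=> j; rewrite ler_pdivlMl //.
  apply: le_trans (qs_ub _ j _ (hZ a x hx)).
  by case: (hq _ j) => _ _ ->; rewrite // mulrCA.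
Qed.

End Q.
Theorem proposition2p1 (R : realType) (X : lmodType R)
    (P : countType) (p : P -> X -> R)
    (I : countType) (J : I -> Type)
    (q : forall i, J i -> X -> R) (w : forall i, J i -> R) :
  frechet_on [set: X] p ->
  (forall i (j : J i), seminorm_on [set: X] (q i j)) ->
  (forall i (j : J i), sn_continuous_real [set: X] p (q i j)) ->
  (forall i (j : J i), 0 <= w i j) ->
  [/\ is_subspace (X_I w q),
      (forall i, seminorm_on (X_I w q) (q_sup w q i)),
      frechet_on (X_I w q) (fam_union p (q_sup w q)),
      (forall (P' : countType) (p' : P' -> X -> R),
          (forall n, seminorm_on [set: X] (p' n)) ->
          (forall A : set X, sn_open [set: X] p A <-> sn_open [set: X] p' A) ->
          forall A : set X,
            sn_open (X_I w q) (fam_union p (q_sup w q)) A <->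
            sn_open (X_I w q) (fam_union p' (q_sup w q)) A) &
      sn_continuous (X_I w q) [set: X] (fam_union p (q_sup w q)) p id].
Proof.
move=> [_ hp hsep hcomp] hq hc hw.
have sub := XI_sub _ _ _ _ _ _ hq hw.
have hqs : forall i, seminorm_on (X_I w q) (q_sup w q i) := fun i => qs_semi _ _ _ _ _ _ hq hw i.
split=> //.
- split=> //.
  + by case=> [n|i] /=; [apply: semi_restr|apply: hqs].
  + by move=> x _ h; apply: hsep => // n; exact: (h (inl n)).
  move=> u Su hC.
  have hCp := fun n => hC (inl n).
  have [x [_ hx]] := hcomp u (fun _ => Logic.I) hCp.
  have K : forall i (e : R), 0 < e -> exists N, forall k, (N <= k)%N ->
      forall j, w i j * q i j (u k - x) < e + e.
    move=> i e he; have [N hN] := hC (inr i) e he.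
    exists N => k kN j.
    pose c := w i j + 1.
    have cp : 0 < c by rewrite /c; have := hw i j; lra.
    have [F [/finite_seqP[s ->] [d [dp hd]]]] := hc i j 0 Logic.I (e / c) (divr_gt0 he cp).
    have [N2 hN2] := event_seq (r := fun n l => p n (u l - x)) hx s dp.
    pose l := maxn N N2.
    have h1 : q i j (u l - x) < e / c.
      have := hd (u l - x) Logic.I.
      rewrite subr0 sn0 // subr0 ger0_norm; last by case: (hq i j) => ->.
      apply=> n ns; rewrite ?subr0; apply: hN2 => //; exact: leq_maxr.
    have h2 : q_sup w q i (u k - u l) < e := hN k l kN (leq_maxl _ _).
    have h3 := qs_ub _ _ _ _ _ _ i j _ (subB sub (Su k) (Su l)).
    have h4 : w i j * q i j (u l - x) < e.
      have q0 : 0 <= q i j (u l - x) by case: (hq i j) => ->.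
      apply: (@le_lt_trans _ _ (c * q i j (u l - x))).
        by apply: ler_wpM2r => //; rewrite /c; lra.
      by rewrite -[X in _ < X](divfK (lt0r_neq0 cp)) [c * _]mulrC ltr_pM2r.
    have h6 : w i j * q i j (u k - x) <=
        w i j * q i j (u k - u l) + w i j * q i j (u l - x).
      by rewrite -mulrDr; apply: ler_wpM2l => //; apply: sntri3.
    lra.
  have Sx : X_I w q x.
    move=> i; have [N hN] := K i 1 ltr01.
    exists (q_sup w q i (u N) + (1 + 1)) => j.
    have := hN N (leqnn N) j; have := qs_ub _ _ _ _ _ _ i j _ (Su N).
    have : w i j * q i j x <= w i j * q i j (u N) + w i j * q i j (u N - x).
      rewrite -mulrDr; apply: ler_wpM2l => //.
      rewrite (snB _ _ (hq i j)); exact: sntri.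
    lra.
  exists x; split=> //.
  case=> [n|i] e he /=; first exact: hx.
  have e3 : 0 < e / 3 by apply: divr_gt0.
  have [N hN] := K i (e / 3) e3.
  exists N => k kN.
  apply: (@le_lt_trans _ _ (e / 3 + e / 3)); last lra.
  apply: qs_le; first lra.
  move=> j; exact: ltW (hN k kN j).
- move=> P' p' hp' heq A.
  have d1 := open_dom hp hp' (fun A => (heq A).1).
  have d2 := open_dom hp' hp (fun A => (heq A).2).
  split; case=> s1 h; split=> // x Ax.
    exact: dom_nbhs (fam_dom _ d1) (h x Ax).
  exact: dom_nbhs (fam_dom _ d2) (h x Ax).
- split=> // x Sx B [F [fF [e [he hB]]]].
  exists [set inl n | n in F]; split; first exact: finite_image.
  exists e; split=> // y Sy hy; apply: hB => // n Fn.
  by apply: (hy (inl n)); exists n.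
Qed.
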